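(* Consider a parallel-link network with $n=2$ links, unit demand and latencies $\ell_1,\ell_2\in\mathcal{L}_c$. Let $t\in\mathcal{T}(\infty)$ and suppose $x_1(t)>0$ and $x_2(t)>0$. Then $x_1(0)\ge x_1(t)$ if and only if $x_1(t)\ge \frac12$.
   Context: $\mathcal{L}_c$: strictly increasing, convex, continuously differentiable functions $\mathbb{R}_+\to\mathbb{R}_+$. Flows $x\in\mathbb{R}^2_+$ with $x_1+x_2=1$. For tolls $t\in\mathbb{R}^2_+$, $x(t)$ is the unique Wardrop equilibrium for $t$ (for all $i,j$ with $x_i>0$: $\ell_i(x_i)+t_i\le\ell_j(x_j)+t_j$); $x(0)$ is the untolled Wardrop equilibrium. Profit $\Pi_i(t)=t_ix_i(t)$. $\mathcal{T}(\infty)$: toll vectors $t\in\mathbb{R}^2_+$ such that for every $i$ and every $t'_i\ge 0$, $\Pi_i(t_i,t_{-i})\ge\Pi_i(t'_i,t_{-i})$ (flow recomputed). *)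

(* Defs.v *)
From Stdlib Require Import Reals Lra.
Open Scope R_scope.

(* Latency class L_c: functions R_+ -> R_+ (represented as R -> R, only values
   on [0,oo) matter) that are strictly increasing, convex and continuously
   differentiable on R_+ (one-sided derivative at 0). *)

Definition nonneg_on_Rplus (f : R -> R) : Prop :=
  forall x, 0 <= x -> 0 <= f x.

Definition strictly_increasing_on_Rplus (f : R -> R) : Prop :=
  forall x y, 0 <= x -> x < y -> f x < f y.

Definition convex_on_Rplus (f : R -> R) : Prop :=
  forall x y lam, 0 <= x -> 0 <= y -> 0 <= lam <= 1 ->
    f (lam * x + (1 - lam) * y) <= lam * f x + (1 - lam) * f y.

Definition C1_on_Rplus (f : R -> R) : Prop :=
  exists d : R -> R,
    (forall x, 0 <= x ->
       limit1_in (fun y => (f y - f x) / (y - x))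
                 (fun y => 0 <= y /\ y <> x) (d x) x) /\
    (forall x, 0 <= x -> limit1_in d (fun y => 0 <= y) (d x) x).

Definition in_Lc (f : R -> R) : Prop :=
  nonneg_on_Rplus f /\ strictly_increasing_on_Rplus f /\
  convex_on_Rplus f /\ C1_on_Rplus f.

Definition feasible (x1 x2 : R) : Prop :=
  0 <= x1 /\ 0 <= x2 /\ x1 + x2 = 1.

(* (x1,x2) is a Wardrop equilibrium for tolls (t1,t2): for all i,j with x_i>0,
   l_i(x_i)+t_i <= l_j(x_j)+t_j  (the cases i = j are trivial). *)
Definition wardrop (l1 l2 : R -> R) (t1 t2 x1 x2 : R) : Prop :=
  feasible x1 x2 /\
  (0 < x1 -> l1 x1 + t1 <= l2 x2 + t2) /\
  (0 < x2 -> l2 x2 + t2 <= l1 x1 + t1).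

(* T(oo): toll vectors in R_+^2 from which no link owner can profitably
   deviate to any nonnegative toll, the flow being recomputed as the
   (unique) Wardrop equilibrium. *)
Definition in_T_inf (l1 l2 : R -> R) (t1 t2 : R) : Prop :=
  0 <= t1 /\ 0 <= t2 /\
  (forall t1', 0 <= t1' -> forall x1 x2 y1 y2,
      wardrop l1 l2 t1 t2 x1 x2 -> wardrop l1 l2 t1' t2 y1 y2 ->
      t1' * y1 <= t1 * x1) /\
  (forall t2', 0 <= t2' -> forall x1 x2 y1 y2,
      wardrop l1 l2 t1 t2 x1 x2 -> wardrop l1 l2 t1 t2' y1 y2 ->
      t2' * y2 <= t2 * x2).

(* Main.v *)
Require Import Defs.
From Stdlib Require Import Reals Lra Psatz.
Open Scope R_scope.

Lemma loc_lip (f : R -> R) : C1_on_Rplus f -> forall x, 0 <= x ->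
  exists M a, 0 < M /\ 0 < a /\ forall y, 0 <= y -> Rabs (y - x) < a ->
    Rabs (f y - f x) <= M * Rabs (y - x).
Proof.
  intros [d [Hd _]] x Hx.
  destruct (Hd x Hx 1 Rlt_0_1) as [alp [Ha Hy]].
  exists (Rabs (d x) + 1), alp.
  split; [pose proof (Rabs_pos (d x)); lra|split; [lra|]].
  intros y Hy0 Hya.
  destruct (Req_dec y x) as [->|Hne].
  { replace (f x - f x) with 0 by ring. rewrite Rabs_R0.
    pose proof (Rabs_pos (x - x)); pose proof (Rabs_pos (d x)); nra. }
  assert (H1 := Hy y (conj (conj Hy0 Hne) Hya)). simpl in H1. unfold R_dist in H1.
  set (q := (f y - f x) / (y - x)) in *.
  assert (Hq : f y - f x = q * (y - x)).
  { unfold q. field. lra. }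
  rewrite Hq, Rabs_mult.
  apply Rmult_le_compat_r; [apply Rabs_pos|].
  pose proof (Rabs_triang (q - d x) (d x)).
  replace (q - d x + d x) with q in H by ring. lra.
Qed.


Theorem mainTheorem9 (l1 l2 : R -> R) (t1 t2 : R)
  (x1 x2 : R) (z1 z2 : R) :
  in_Lc l1 -> in_Lc l2 ->
  in_T_inf l1 l2 t1 t2 ->
  wardrop l1 l2 t1 t2 x1 x2 ->   (* x(t) = (x1, x2) *)
  wardrop l1 l2 0 0 z1 z2 ->     (* x(0) = (z1, z2) *)
  0 < x1 -> 0 < x2 ->
  (x1 <= z1 <-> 1 / 2 <= x1).
Proof.
  intros [_ [SI1 [_ C1]]] [_ [SI2 [_ C2]]] [Ht1 [Ht2 [O1 O2]]] Wx Wz Hx1 Hx2.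
  pose proof Wx as Wx'.
  destruct Wx' as [[_ [_ Hs]] [W1 W2]].
  assert (E : l1 x1 + t1 = l2 x2 + t2) by (specialize (W1 Hx1); specialize (W2 Hx2); lra).
  set (g := fun y => l1 y - l2 (1 - y) - (l1 x1 - l2 x2)).
  assert (D1 : forall y, 0 < y < 1 -> 0 <= t1 - g y -> (t1 - g y) * y <= t1 * x1).
  { intros y Hy Ht. apply (O1 _ Ht x1 x2 y (1 - y) Wx).
    unfold g in *. split; [split; lra|]. split; intros; lra. }
  assert (D2 : forall y, 0 < y < 1 -> 0 <= t2 + g y -> (t2 + g y) * (1 - y) <= t2 * x2).
  { intros y Hy Ht. apply (O2 _ Ht x1 x2 y (1 - y) Wx).
    unfold g in *. split; [split; lra|]. split; intros; lra. }
  assert (Gup : forall y, x1 < y < 1 -> 0 < g y).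
  { intros y Hy. unfold g. pose proof (SI1 x1 y ltac:(lra) ltac:(lra)).
    pose proof (SI2 (1 - y) x2 ltac:(lra) ltac:(lra)). lra. }
  assert (Gdn : forall y, 0 < y < x1 -> g y < 0).
  { intros y Hy. unfold g. pose proof (SI1 y x1 ltac:(lra) ltac:(lra)).
    pose proof (SI2 x2 (1 - y) ltac:(lra) ltac:(lra)). lra. }
  assert (Pt1 : 0 < t1).
  { assert (Hy : 0 < x1 / 2 < x1) by lra.
    pose proof (Gdn _ Hy).
    pose proof (D1 (x1 / 2) ltac:(lra) ltac:(lra)). nra. }
  assert (Pt2 : 0 < t2).
  { assert (Hy : x1 < (x1 + 1) / 2 < 1) by lra.
    pose proof (Gup _ Hy).
    pose proof (D2 ((x1 + 1) / 2) ltac:(lra) ltac:(lra)).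
    replace (1 - (x1 + 1) / 2) with (x2 / 2) in H0 by lra. nra. }
  destruct (loc_lip _ C1 x1 ltac:(lra)) as [M1 [a1 [HM1 [Ha1 L1]]]].
  destruct (loc_lip _ C2 x2 ltac:(lra)) as [M2 [a2 [HM2 [Ha2 L2]]]].
  assert (Lg : forall y, 0 <= y <= 1 -> Rabs (y - x1) < a1 -> Rabs (y - x1) < a2 ->
            Rabs (g y) <= (M1 + M2) * Rabs (y - x1)).
  { intros y Hy H1 H2. unfold g.
    assert (Habs : Rabs (1 - y - x2) = Rabs (y - x1)).
    { replace (1 - y - x2) with (- (y - x1)) by lra. apply Rabs_Ropp. }
    pose proof (L1 y ltac:(lra) H1) as P1.
    assert (Hb : Rabs (1 - y - x2) < a2) by (rewrite Habs; lra).
    pose proof (L2 (1 - y) ltac:(lra) Hb) as P2.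
    rewrite Habs in P2.
    replace (l1 y - l2 (1 - y) - (l1 x1 - l2 x2)) with
      ((l1 y - l1 x1) - (l2 (1 - y) - l2 x2)) by ring.
    pose proof (Rabs_triang (l1 y - l1 x1) (- (l2 (1 - y) - l2 x2))) as P3.
    rewrite Rabs_Ropp in P3. unfold Rminus at 1. lra. }
  set (M := M1 + M2).
  assert (HM : 0 < M) by (unfold M; lra).
  set (d0 := Rmin (Rmin a1 a2) (Rmin (Rmin x1 x2) (Rmin (t1 / M) (t2 / M)))).
  assert (Hd0 : 0 < d0).
  { unfold d0. repeat apply Rmin_pos; try lra; apply Rdiv_lt_0_compat; lra. }
  assert (Hd0a : d0 <= a1 /\ d0 <= a2 /\ d0 <= x1 /\ d0 <= x2 /\ d0 * M <= t1 /\ d0 * M <= t2).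
  { unfold d0.
    pose proof (Rmin_l (Rmin a1 a2) (Rmin (Rmin x1 x2) (Rmin (t1 / M) (t2 / M)))).
    pose proof (Rmin_r (Rmin a1 a2) (Rmin (Rmin x1 x2) (Rmin (t1 / M) (t2 / M)))).
    pose proof (Rmin_l a1 a2). pose proof (Rmin_r a1 a2).
    pose proof (Rmin_l (Rmin x1 x2) (Rmin (t1 / M) (t2 / M))).
    pose proof (Rmin_r (Rmin x1 x2) (Rmin (t1 / M) (t2 / M))).
    pose proof (Rmin_l x1 x2). pose proof (Rmin_r x1 x2).
    pose proof (Rmin_l (t1 / M) (t2 / M)). pose proof (Rmin_r (t1 / M) (t2 / M)).
    set (m := Rmin (Rmin a1 a2) (Rmin (Rmin x1 x2) (Rmin (t1 / M) (t2 / M)))) in *.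
    assert (m * M <= t1 / M * M) by nra.
    assert (m * M <= t2 / M * M) by nra.
    replace (t1 / M * M) with t1 in * by (field; lra).
    replace (t2 / M * M) with t2 in * by (field; lra).
    repeat split; lra. }
  assert (Key : forall d, 0 < d < d0 ->
            t1 * x2 - t2 * x1 <= d * (t1 + t2) /\ - (t1 * x2 - t2 * x1) <= d * (t1 + t2)).
  { intros d Hd. destruct Hd0a as [A1 [A2 [A3 [A4 [A5 A6]]]]].
    split.
    - set (y := x1 + d).
      assert (Hy : x1 < y < 1) by (unfold y; lra).
      assert (Hyd : Rabs (y - x1) = d) by (unfold y; replace (x1 + d - x1) with d by ring; apply Rabs_pos_eq; lra).
      pose proof (Gup y Hy) as Gp.
      pose proof (Lg y ltac:(lra) ltac:(lra) ltac:(lra)) as Lb.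
      rewrite Hyd, Rabs_pos_eq in Lb by lra.
      assert (d * M <= d0 * M) by (apply Rmult_le_compat_r; lra).
      assert (g y <= t1) by (fold M in Lb; lra).
      pose proof (D1 y ltac:(lra) ltac:(lra)) as P1.
      pose proof (D2 y ltac:(lra) ltac:(lra)) as P2.
      unfold y in P1, P2.
      assert (Q1 : t1 * d <= g y * (x1 + d)) by (unfold y; nra).
      assert (Q2 : g y * (x2 - d) <= t2 * d) by (unfold y in *; nra).
      assert (t1 * d * (x2 - d) <= t2 * d * (x1 + d)) by nra.
      assert (t1 * (x2 - d) <= t2 * (x1 + d)) by nra.
      nra.
    - set (y := x1 - d).
      assert (Hy : 0 < y < x1) by (unfold y; lra).
      assert (Hyd : Rabs (y - x1) = d) by (unfold y; replace (x1 - d - x1) with (- d) by ring; rewrite Rabs_Ropp; apply Rabs_pos_eq; lra).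
      pose proof (Gdn y Hy) as Gp.
      pose proof (Lg y ltac:(lra) ltac:(lra) ltac:(lra)) as Lb.
      rewrite Hyd, Rabs_left in Lb by lra.
      assert (d * M <= d0 * M) by (apply Rmult_le_compat_r; lra).
      assert (- g y <= t2) by (fold M in Lb; lra).
      pose proof (D1 y ltac:(lra) ltac:(lra)) as P1.
      pose proof (D2 y ltac:(lra) ltac:(lra)) as P2.
      unfold y in P1, P2.
      assert (Q1 : - g y * (x1 - d) <= t1 * d) by (unfold y in *; nra).
      assert (Q2 : t2 * d <= - g y * (x2 + d)) by (unfold y in *; nra).
      assert (t2 * d * (x1 - d) <= t1 * d * (x2 + d)) by nra.
      assert (t2 * (x1 - d) <= t1 * (x2 + d)) by nra.
      nra. }
  assert (F0 : t1 * x2 = t2 * x1).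
  { destruct (Req_dec (t1 * x2) (t2 * x1)) as [e|ne]; [exact e|exfalso].
    set (F := Rabs (t1 * x2 - t2 * x1)).
    assert (HF : 0 < F) by (unfold F; apply Rabs_pos_lt; lra).
    set (d := Rmin (d0 / 2) (F / (2 * (t1 + t2)))).
    assert (Hd1 : 0 < d) by (unfold d; apply Rmin_pos; [lra| apply Rdiv_lt_0_compat; lra]).
    assert (Hd2 : d < d0) by (unfold d; pose proof (Rmin_l (d0 / 2) (F / (2 * (t1 + t2)))); lra).
    assert (Hd3 : d * (t1 + t2) <= F / 2).
    { unfold d. pose proof (Rmin_r (d0 / 2) (F / (2 * (t1 + t2)))).
      apply Rle_trans with (F / (2 * (t1 + t2)) * (t1 + t2)); [nra|].
      right. field. lra. }
    destruct (Key d (conj Hd1 Hd2)) as [K1 K2].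
    unfold F in *. destruct (Rcase_abs (t1 * x2 - t2 * x1)).
    - rewrite Rabs_left in Hd3 by lra. lra.
    - rewrite Rabs_pos_eq in Hd3 by lra. lra. }
  destruct Wz as [[Hz1 [Hz2 Hzs]] [V1 V2]].
  split.
  - intros Hle. destruct (Rlt_or_le x1 (1/2)) as [Hlt|Hge]; [exfalso|exact Hge].
    assert (t1 < t2) by nra.
    assert (l1 x1 <= l1 z1) by (destruct (Req_dec x1 z1) as [<-|]; [lra|]; left; apply SI1; lra).
    assert (l2 z2 <= l2 x2) by (destruct (Req_dec z2 x2) as [->|]; [lra|]; left; apply SI2; lra).
    specialize (V1 ltac:(lra)). lra.
  - intros Hge. destruct (Rlt_or_le z1 x1) as [Hlt|Hle]; [exfalso|exact Hle].
    assert (t2 <= t1) by nra.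
    pose proof (SI1 z1 x1 Hz1 Hlt). pose proof (SI2 x2 z2 ltac:(lra) ltac:(lra)).
    specialize (V2 ltac:(lra)). lra.
Qed.
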